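(* Let $A$ be an algorithm of type GroupLIS$(\beta)$, $\beta\in\mathbb{N}$, run with some speedup $s$, and let $I$ be a time interval during which the list $L$ of pending tasks of some cost $c$ contains at least $\beta n^2$ tasks at all times. Then for any two distinct absolute task executions fully contained in $I$, of tasks $\tau_1,\tau_2\in L$ by processors $p_1$ and $p_2$ respectively, we have $\tau_1\ne\tau_2$.
   Context: Model: $n$ processors with ids $1,\dots,n$ and a shared repository; tasks with ids, arrival times and costs are injected over time, processors may crash and restart. A task is pending if injected and its completion not yet reported; once reported it is immediately removed from the pending set. A processor repeatedly obtains the pending set, chooses a task, executes it (a task of cost $\ell$ takes time $\ell/s$ under speedup $s$) and reports it; execution is non-preemptive and a crash loses progress. An absolute task execution of task $\tau$ is an interval $[t,t']$ such that a processor schedules $\tau$ at time $t$ and reports its completion at $t'$ without stopping its execution within $[t,t')$. An algorithm is of type GroupLIS$(\beta)$ if it partitions pending tasks into classes of equal cost, sorts each class in increasing order of arrival time, and whenever a class contains at least $\beta n^2$ pending tasks and a processor $p$ schedules a task from that class, it schedules the $(p\cdot\beta n)$-th task of the class. *)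

(* Defs.v *)
From mathcomp Require Import all_boot.
From Stdlib Require Import Reals.

Set Implicit Arguments.
Unset Strict Implicit.
Unset Printing Implicit Defensive.

(* An execution attempt: processor [a_proc] schedules task [a_task] at time
   [a_start] and executes it without interruption until [a_end]; either it
   completes and reports at [a_end] ([a_done = true]), or the processor
   crashes at [a_end] and all progress is lost ([a_done = false]).           *)
Record attempt := Attempt {
  a_proc : nat;
  a_task : nat;
  a_start : R;
  a_end : R;
  a_done : bool }.

Record system := System {
  istask : nat -> Prop;
  arr : nat -> R;
  cost : nat -> R;
  att : attempt -> Prop }.

Definition reported_by (S : system) (x : nat) (t : R) : Prop :=
  exists a, att S a /\ a_done a = true /\ a_task a = x /\ (a_end a <= t)%R.

Definition pending (S : system) (x : nat) (t : R) : Prop :=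
  istask S x /\ (arr S x <= t)%R /\ ~ reported_by S x t.

Record valid_run (n : nat) (s : R) (S : system) : Prop := {
  vr_cost_pos : forall x, istask S x -> (0 < cost S x)%R;
  vr_proc : forall a, att S a -> (1 <= a_proc a <= n)%N;
  vr_pending : forall a, att S a -> pending S (a_task a) (a_start a);
  vr_done : forall a, att S a -> a_done a = true ->
      a_end a = (a_start a + cost S (a_task a) / s)%R;
  vr_crash : forall a, att S a -> a_done a = false ->
      (a_start a <= a_end a < a_start a + cost S (a_task a) / s)%R;
  vr_seq : forall a b, att S a -> att S b -> a <> b -> a_proc a = a_proc b ->
      (a_end a <= a_start b \/ a_end b <= a_start a)%R }.

Definition abs_exec (S : system) (a : attempt) : Prop :=
  att S a /\ a_done a = true.

Definition in_class (S : system) (c : R) (t : R) (x : nat) : Prop :=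
  pending S x t /\ cost S x = c.

Definition class_at_least (S : system) (c t : R) (k : nat) : Prop :=
  exists l : seq nat, uniq l /\ (k <= size l)%N /\
    forall x, x \in l -> in_class S c t x.

(* [ord] is the order "increasing arrival time" used for sorting (a strict
   total order on task ids refining the arrival times; ties broken in some
   fixed way). *)
Definition arrival_order (S : system) (ord : nat -> nat -> Prop) : Prop :=
  (forall x, ~ ord x x) /\
  (forall x y z, ord x y -> ord y z -> ord x z) /\
  (forall x y, x <> y -> ord x y \/ ord y x) /\
  (forall x y, (arr S x < arr S y)%R -> ord x y).

(* x is the k-th task (1-indexed) of the class of cost c, sorted by ord, at
   time t: x is in the class and exactly k-1 tasks of the class precede it. *)
Definition kth_in_class (S : system) (ord : nat -> nat -> Prop)
    (c t : R) (k : nat) (x : nat) : Prop :=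
  in_class S c t x /\
  exists l : seq nat, uniq l /\ size l = k.-1 /\
    forall y, y \in l <-> (in_class S c t y /\ ord y x).

Definition GroupLIS (n beta : nat) (S : system) (ord : nat -> nat -> Prop) : Prop :=
  arrival_order S ord /\
  forall a, att S a ->
    class_at_least S (cost S (a_task a)) (a_start a) (beta * expn n 2) ->
    kth_in_class S ord (cost S (a_task a)) (a_start a)
      (a_proc a * (beta * n)) (a_task a).

Definition is_interval (I : R -> Prop) : Prop :=
  forall x y z, I x -> I z -> (x <= y <= z)%R -> I y.

(* Main.v *)
Require Import Defs.
From mathcomp Require Import all_boot zify.
From Stdlib Require Import Reals Lra Classical ClassicalEpsilon.

Lemma no_before n s S a b : valid_run n s S -> att S a -> att S b ->
  a_done a = true -> a_task a = a_task b -> (a_end a <= a_start b)%R -> False.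
Proof.
move=> V Ha Hb Hd Ht Hle.
have [_ [_ Hn]] := vr_pending V Hb.
apply: Hn; exists a; split=> //; split=> //; split=> //.
Qed.

Lemma core n beta s S ord c a1 a2 :
  (0 < beta)%N -> (0 < s)%R -> valid_run n s S -> GroupLIS n beta S ord ->
  att S a1 -> att S a2 -> a_done a1 = true ->
  a_task a1 = a_task a2 -> cost S (a_task a1) = c ->
  a_proc a1 <> a_proc a2 ->
  (a_start a1 <= a_start a2)%R -> (a_start a2 < a_end a1)%R ->
  class_at_least S c (a_start a1) (beta * expn n 2) ->
  class_at_least S c (a_start a2) (beta * expn n 2) -> False.
Proof.
move=> Hb Hs V [[Irr [Tr [Tot Arr]]] G] H1 H2 D1 Ht Hc Hp Hle Hlt C1 C2.
have E1 : a_end a1 = ((a_start a1) + c / s)%R by rewrite (vr_done V H1 D1) -Hc.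
have [K1 [l1 [U1 [S1 M1]]]] := G a1 H1 (ltac:(rewrite Hc; exact C1)).
have [K2 [l2 [U2 [S2 M2]]]] := G a2 H2 (ltac:(rewrite -Ht Hc; exact C2)).
rewrite -Ht Hc in K2 M2.
rewrite Hc in K1 M1.
have P1 := vr_proc V H1. have P2 := vr_proc V H2.
have sub : forall y, y \in l2 -> y \in l1.
  move=> y /M2 [[[Hi [Ha Hr]] Hcy] Ho]; apply/M1; split=> //; split=> //.
  split=> //; split.
  - have Hx : (arr S (a_task a1) <= a_start a1)%R by case: K1 => [[_ [? _]] _].
    destruct (Rlt_or_le (arr S (a_task a1)) (arr S y)) as [h|h]; last lra.
    by case: (Irr y); apply: Tr Ho (Arr _ _ h).
  - move=> [b [? [? [? ?]]]]; apply: Hr; exists b; do 3 split=> //; lra.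
have wit : forall y, y \in l1 -> y \notin l2 -> exists b, att S b /\ a_done b = true /\
    a_task b = y /\ ((a_start a1) < a_end b <= (a_start a2))%R.
  move=> y /M1 [[[Hi [Ha Hr]] Hcy] Ho] Hn.
  have Rp : reported_by S y (a_start a2).
    apply: NNPP => Hnr; move/negP: Hn; apply; apply/M2.
    split; [split; [split; [exact Hi| split; [lra|exact Hnr]]|exact Hcy]|exact Ho].
  case: Rp => b [Hb' [Hd [Hty He]]]; exists b; do 3 split=> //; split=> //.
  destruct (Rlt_or_le (a_start a1) (a_end b)) as [h|h] => //.
  by case: Hr; exists b.
have Hf : forall y, exists p, (y \in l1) && (y \notin l2) -> exists b, att S b /\ a_done b = true /\
    a_task b = y /\ ((a_start a1) < a_end b <= (a_start a2))%R /\ a_proc b = p.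
  move=> y; case: (boolP ((y \in l1) && (y \notin l2))) => [/andP [h1 h2]|_].
    have [b [? [? [? ?]]]] := wit y h1 h2; exists (a_proc b) => _; exists b; done.
  by exists 0.
pose f y := proj1_sig (constructive_indefinite_description _ (Hf y)).
have fP : forall y, y \in l1 -> y \notin l2 -> exists b, att S b /\ a_done b = true /\
    a_task b = y /\ ((a_start a1) < a_end b <= (a_start a2))%R /\ a_proc b = f y.
  move=> y h1 h2; rewrite /f; case: constructive_indefinite_description => p /= hp.
  by apply: hp; rewrite h1 h2.
have costl1 : forall y, y \in l1 -> cost S y = c /\ y <> a_task a1.
  move=> y /M1 [[_ ?] Ho]; split=> // E; rewrite E in Ho; exact: Irr Ho.
have durb : forall b, att S b -> a_done b = true -> a_task b \in l1 ->
    a_start b = (a_end b - c / s)%R.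
  move=> b hb hd hl; rewrite (vr_done V hb hd); have [-> _] := costl1 _ hl; lra.
set Dl := [seq y <- l1 | y \notin l2].
have UD : uniq (map f Dl).
  rewrite map_inj_in_uniq ?filter_uniq //.
  move=> y z; rewrite !mem_filter => /andP [ny ly] /andP [nz lz] Efz.
  have [by_ [hby [hdy [hty [ey py]]]]] := fP y ly ny.
  have [bz [hbz [hdz [htz [ez pz]]]]] := fP z lz nz.
  apply: NNPP => Nyz.
  have Nb : by_ <> bz by move=> E; apply: Nyz; rewrite -hty -htz E.
  have := vr_seq V hby hbz Nb (ltac:(by rewrite py pz)).
  rewrite (durb _ hbz hdz) ?htz // (durb _ hby hdy) ?hty //.
  have : ((a_start a2) < (a_start a1) + c / s)%R by lra.
  lra.
have SD : {subset map f Dl <= rem (a_proc a1) (iota 1 n)}.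
  move=> q /mapP [y]; rewrite mem_filter => /andP [ny ly] ->.
  have [b [hb [hd [ht [eb pb]]]]] := fP y ly ny.
  rewrite mem_rem_uniq ?iota_uniq // inE mem_iota.
  have := vr_proc V hb; rewrite -pb => Pb.
  apply/andP; split; last by lia.
  apply/eqP => Epb.
  have Nb : b <> a1.
    move=> E; have [_ Nx] := costl1 _ ly; apply: Nx; by rewrite -ht E.
  have := vr_seq V hb H1 Nb Epb.
  rewrite (durb _ hb hd) ?ht //.
  have : ((a_start a2) < (a_start a1) + c / s)%R by lra.
  lra.
have szD : (size Dl <= n.-1)%N.
  have := uniq_leq_size UD SD.
  rewrite size_map size_rem ?size_iota //.
  rewrite mem_iota; lia.
have szI : (size [seq y <- l1 | y \in l2] <= size l2)%N.
  apply: uniq_leq_size; first by rewrite filter_uniq.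
  by move=> y; rewrite mem_filter => /andP [].
have sz1 : (size l1 <= n.-1 + size l2)%N.
  have := count_predC (fun y => y \in l2) l1.
  rewrite -!size_filter => E.
  have : (size [seq y <- l1 | y \in l2] + size Dl = size l1)%N by exact E.
  lia.
have sz2 : (size l2 <= size l1)%N by apply: uniq_leq_size.
rewrite S1 S2 in sz1 sz2.
set m := beta * n in sz1 sz2.
have mn : (n <= m)%N by rewrite /m; apply: leq_pmull.
have n1 : (1 <= n)%N by lia.
have A1 : (1 <= a_proc a1 * m)%N by rewrite muln_gt0; apply/andP; split; lia.
have A2 : (1 <= a_proc a2 * m)%N by rewrite muln_gt0; apply/andP; split; lia.
case: (ltngtP (a_proc a1) (a_proc a2)) => h.
- have : (a_proc a1 * m < a_proc a2 * m)%N by rewrite ltn_pmul2r //; lia.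
  lia.
- have : ((a_proc a2).+1 * m <= a_proc a1 * m)%N by rewrite leq_mul2r h orbT.
  rewrite mulSn; lia.
- by apply: Hp.
Qed.

Theorem lemma9 (n beta : nat) (s : R) (S : system) (ord : nat -> nat -> Prop)
    (I : R -> Prop) (c : R) :
  (0 < beta)%N -> (0 < s)%R ->
  valid_run n s S -> GroupLIS n beta S ord ->
  is_interval I ->
  (forall t, I t -> class_at_least S c t (beta * expn n 2)) ->
  forall a1 a2 : attempt,
    abs_exec S a1 -> abs_exec S a2 -> a1 <> a2 ->
    (forall u, (a_start a1 <= u <= a_end a1)%R -> I u) ->
    (forall u, (a_start a2 <= u <= a_end a2)%R -> I u) ->
    cost S (a_task a1) = c -> cost S (a_task a2) = c ->
    a_task a1 <> a_task a2.
Proof.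
move=> Hb Hs V G _ HC a1 a2 [H1 D1] [H2 D2] Ne I1 I2 C1 C2 Et.
have dur : forall a, att S a -> a_done a = true -> (a_start a <= a_end a)%R.
  move=> a ha hd; rewrite (vr_done V ha hd).
  have [hi _] := vr_pending V ha.
  have := vr_cost_pos V hi.
  have : (0 < / s)%R by apply: Rinv_0_lt_compat.
  move=> h1 h2; unfold Rdiv; have := Rmult_lt_0_compat _ _ h2 h1; lra.
have Cl1 := HC _ (I1 (a_start a1) (ltac:(have := dur _ H1 D1; lra))).
have Cl2 := HC _ (I2 (a_start a2) (ltac:(have := dur _ H2 D2; lra))).
case: (Rlt_or_le (a_start a2) (a_end a1)) => h12; last first.
  exact: (@no_before _ _ _ _ _ V H1 H2 D1 Et h12).
case: (Rlt_or_le (a_start a1) (a_end a2)) => h21; last first.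
  exact: (@no_before _ _ _ _ _ V H2 H1 D2 (esym Et) h21).
case: (eqVneq (a_proc a1) (a_proc a2)) => Hp.
  case: (vr_seq V H1 H2 Ne Hp) => h; lra.
case: (Rle_or_lt (a_start a1) (a_start a2)) => hs.
  exact: (@core _ _ _ _ _ _ _ _ Hb Hs V G H1 H2 D1 Et C1 (elimN eqP Hp) hs h12 Cl1 Cl2).
apply: (@core _ _ _ _ _ _ _ _ Hb Hs V G H2 H1 D2 (esym Et) C2 _ (Rlt_le _ _ hs) h21 Cl2 Cl1).
by move=> E; rewrite E eqxx in Hp.
Qed.
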